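(* Let $G=(V,E)$ be a connected graph with $n$ vertices, $\tau$ a set of types with $|\tau|=k>1$, $f:\tau\to\mathbb{Q}_{\ge1}$ a fitness function, $\alpha\in\tau^+(f)$, $f^*=\max\{f(j):j\in\tau\setminus\{\alpha\}\}$, and suppose $f^*<f(\alpha)=f^+$. Let $M_0\in\Omega_0(G,\tau)$. Then $\mathbb{E}(A_\alpha(G,\tau,f,M_0))\le \frac{f^+}{f^+-f^*}(n+1)n^3$.
   Context: $f^+=\max_{i\in\tau}f(i)$, $\tau^+(f)=\{i:f(i)=f^+\}$. For $G=(V,E)$, $N(v)$ is the neighbourhood of $v$. For a state $S:V\to\tau$, $S|_{v\to w}$ equals $S$ except $w$ gets type $S(v)$. The Moran process $M(G,\tau,f,M_0)$: Markov chain on states from $M_0$; given $M_t$, choose $v$ with probability $f(M_t(v))/\sum_uf(M_t(u))$, then $w\in N(v)$ uniformly, set $M_{t+1}=M_t|_{v\to w}$. $V_j(t)=\{v:M_t(v)=j\}$. $\Omega_0(G,\tau)$ is the set of states $V\to\tau$ whose range is all of $\tau$. The absorption time of type $j$ is $A_j(G,\tau,f,M_0)=\min\{t\in\mathbb{Z}_{\ge0}: V_j(t)=V\text{ or }V_j(t)=\emptyset\}$. *)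

(* Defs.v *)
From HB Require Import structures.
From mathcomp Require Import all_boot all_order all_algebra.
Set Implicit Arguments. Unset Strict Implicit. Unset Printing Implicit Defensive.
Import Order.TTheory GRing.Theory Num.Theory.
Local Open Scope ring_scope.

Section Moran.
Variables (V tau : finType) (e : rel V) (f : tau -> rat).

Definition nbhd (v : V) : {set V} := [set w | e v w].

Definition state := {ffun V -> tau}.

(* f^+ and f^* (the max over an empty/nonempty family, default 0 is harmless
   since fitnesses are >= 1 and tau has >= 2 elements). *)
Definition fplus : rat := \big[Num.max/0]_(i : tau) f i.
Definition tauplus : {set tau} := [set i | f i == fplus].
Definition fstar (alpha : tau) : rat := \big[Num.max/0]_(j : tau | j != alpha) f j.

Definition Omega0 (S : state) : bool := [forall j : tau, exists v : V, S v == j].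

Definition upd (S : state) (v w : V) : state :=
  [ffun x => if x == w then S v else S x].

Definition total_fitness (S : state) : rat := \sum_(u : V) f (S u).

Definition trans (S S' : state) : rat :=
  \sum_(v : V) \sum_(w in nbhd v)
     (if upd S v w == S' then
        (f (S v) / total_fitness S) * (#|nbhd v|%:R)^-1
      else 0).

Definition absorbed (j : tau) (S : state) : bool :=
  [forall v, S v == j] || [forall v, S v != j].

(* surv j M0 t S = P(M_t = S and A_j > t), i.e. the chain killed at absorption. *)
Fixpoint surv (j : tau) (M0 : state) (t : nat) : {ffun state -> rat} :=
  match t with
  | 0 => [ffun S => if (S == M0) && ~~ absorbed j S then 1 else 0]
  | t'.+1 => [ffun S' => if absorbed j S' then 0
                        else \sum_(S : state) surv j M0 t' S * trans S S']
  end.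

Definition tail_prob (j : tau) (M0 : state) (t : nat) : rat :=
  \sum_(S : state) surv j M0 t S.

(* E(A_j) = sum_{t>=0} P(A_j > t) (an extended nonnegative real);
   "E(A_j) <= b" is stated as: every partial sum of this series is <= b. *)
Definition expected_absorption_le (j : tau) (M0 : state) (b : rat) : Prop :=
  forall N : nat, \sum_(t < N) tail_prob j M0 t <= b.

End Moran.

(* Main.v *)
Require Import Defs.
From HB Require Import structures.
From mathcomp Require Import all_boot all_order all_algebra.
Import Order.TTheory GRing.Theory Num.Theory.
Local Open Scope ring_scope.
From mathcomp Require Import ring lra.
Set Implicit Arguments. Unset Strict Implicit.
Import Order.TTheory GRing.Theory Num.Theory.
Local Open Scope ring_scope.

Section Proof.
Variables (V tau : finType) (e : rel V) (f : tau -> rat) (alpha : tau).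
Hypothesis e_sym : symmetric e.
Hypothesis hf : forall i, 1 <= f i.

Definition dg (v : V) : rat := (#|nbhd e v|)%:R.
Definition phi (S : state V tau) : rat :=
  \sum_(x : V) ((S x == alpha)%:R * (dg x)^-1).
Definition cf (S : state V tau) (v : V) : rat :=
  f (S v) / total_fitness f S * (dg v)^-1.

Lemma trans_ge0 S S' : 0 <= trans e f S S'.
Proof.
rewrite /trans; apply: sumr_ge0 => v _; apply: sumr_ge0 => w _.
case: ifP => // _; apply: mulr_ge0; last by rewrite invr_ge0 ler0n.
apply: divr_ge0; first by apply: le_trans (hf _).
by apply: sumr_ge0 => u _; apply: le_trans (hf _).
Qed.

Lemma trans_sum (g : state V tau -> rat) S :
  \sum_(S' : state V tau) trans e f S S' * g S' =
  \sum_(v : V) \sum_(w in nbhd e v) cf S v * g (upd S v w).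
Proof.
rewrite /trans.
under eq_bigr do rewrite mulr_suml.
rewrite exchange_big /=; apply: eq_bigr => v _.
under eq_bigr do rewrite mulr_suml.
rewrite exchange_big /=; apply: eq_bigr => w _.
rewrite (bigD1 (upd S v w)) //= eqxx big1 ?addr0 //.
by move=> S' hS'; rewrite eq_sym (negbTE hS') mul0r.
Qed.

Lemma phi_upd S v w :
  phi (upd S v w) = phi S + ((S v == alpha)%:R - (S w == alpha)%:R) * (dg w)^-1.
Proof.
rewrite /phi (bigD1 w) //= [in RHS](bigD1 w) //= ffunE eqxx.
have -> : \sum_(i | i != w) ((upd S v w i == alpha)%:R * (dg i)^-1) =
          \sum_(i | i != w) ((S i == alpha)%:R * (dg i)^-1).
  by apply: eq_bigr => i hi; rewrite ffunE (negbTE hi).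
ring.
Qed.

Hypothesis hmax : forall i, f i <= f alpha.
Hypothesis hstar : fstar f alpha < f alpha.

Lemma le_star j : j != alpha -> f j <= fstar f alpha.
Proof. by move=> hj; rewrite /fstar; apply: (le_bigmax_cond _ (fun j => f j)). Qed.

Definition kk (S : state V tau) v w : rat := (total_fitness f S * dg v * dg w)^-1.

Lemma kk_sym S v w : kk S v w = kk S w v.
Proof. by rewrite /kk -!mulrA [dg v * _]mulrC. Qed.

Lemma kk_ge0 S v w : 0 <= kk S v w.
Proof.
rewrite /kk invr_ge0; apply: mulr_ge0; last exact: ler0n.
apply: mulr_ge0; last exact: ler0n.
by apply: sumr_ge0 => u _; apply: le_trans (hf _).
Qed.

Definition gg (S : state V tau) v w : rat :=
  if e v w then (S v == alpha)%:R * (1 - (S w == alpha)%:R) * (f (S v) - f (S w)) * kk S v w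
  else 0.

Lemma drift_eq S :
  \sum_(v : V) \sum_(w in nbhd e v) cf S v * (((S v == alpha)%:R - (S w == alpha)%:R) * (dg w)^-1)
  = \sum_(v : V) \sum_(w : V) gg S v w.
Proof.
pose p v w : rat := if e v w then f (S v) * ((S v == alpha)%:R * (1 - (S w == alpha)%:R)) * kk S v w else 0.
pose q v w : rat := if e v w then f (S v) * ((S w == alpha)%:R * (1 - (S v == alpha)%:R)) * kk S v w else 0.
have E1 : forall v, \sum_(w in nbhd e v) cf S v * (((S v == alpha)%:R - (S w == alpha)%:R) * (dg w)^-1)
   = \sum_w (p v w - q v w).
  move=> v; rewrite big_mkcond /=; apply: eq_bigr => w _.
  rewrite /p /q inE; case: (e v w); last by rewrite subr0.
  rewrite /cf /kk !invfM; ring.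
have E2 : \sum_v \sum_w q v w = \sum_v \sum_w (if e v w then f (S w) * ((S v == alpha)%:R * (1 - (S w == alpha)%:R)) * kk S v w else 0).
  rewrite exchange_big /=; apply: eq_bigr => v _; apply: eq_bigr => w _.
  by rewrite /q e_sym kk_sym.
under eq_bigr do rewrite E1 sumrB.
rewrite sumrB E2 -sumrB; apply: eq_bigr => v _; rewrite -sumrB; apply: eq_bigr => w _.
rewrite /p /gg; case: (e v w); last by rewrite subr0.
ring.
Qed.

Lemma gg_ge0 S v w : 0 <= gg S v w.
Proof.
rewrite /gg; case: (e v w) => //.
have [hv|hv] := eqVneq (S v) alpha; last by rewrite !mul0r.
have [hw|hw] := eqVneq (S w) alpha; first by rewrite subrr mulr0 !mul0r.
rewrite hv subr0 !mul1r; apply: mulr_ge0; last exact: kk_ge0.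
rewrite subr_ge0; exact: hmax.
Qed.

Hypothesis G_conn : forall x y : V, connect e x y.

Lemma boundary S : ~~ absorbed alpha S ->
  exists v w, [/\ e v w, S v == alpha & S w != alpha].
Proof.
rewrite /absorbed negb_or => /andP[/forallPn[x hx] /forallPn[y]].
rewrite negbK => hy.
suff : [exists v, exists w, [&& e v w, S v == alpha & S w != alpha]].
  by move=> /existsP[v /existsP[w /and3P[a b c]]]; exists v, w.
apply: contraT => /existsPn hno.
have hcl : closed e [pred u | S u == alpha].
  move=> u w huw /=; rewrite /in_mem /=.
  have [hu|hu] := eqVneq (S u) alpha; have [hw|hw] := eqVneq (S w) alpha => //.
  - by move: (hno u) => /existsPn /(_ w); rewrite huw hu eqxx hw.
  - by move: (hno w) => /existsPn /(_ u); rewrite e_sym huw hw eqxx hu.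
have := closed_connect hcl (G_conn y x).
by rewrite /in_mem /= hy (negbTE hx).
Qed.

Definition delta : rat := (f alpha - fstar f alpha) / (f alpha * (#|V|%:R)^+3).

Lemma F_le (S : state V tau) : total_fitness f S <= #|V|%:R * f alpha.
Proof.
rewrite /total_fitness (le_trans (ler_sum _ (fun u _ => hmax (S u)))) //.
by rewrite sumr_const mulr_natl.
Qed.

Lemma dg_le v : dg v <= #|V|%:R.
Proof. by rewrite /dg ler_nat max_card. Qed.

Lemma drift_lb (S : state V tau) : ~~ absorbed alpha S -> delta <= \sum_(v : V) \sum_(w : V) gg S v w.
Proof.
move=> /boundary [v0 [w0 [hvw hv hw]]].
rewrite (bigD1 v0) //= (bigD1 w0) //=.
have h1 : 0 <= \sum_(i | i != w0) gg S v0 i by apply: sumr_ge0 => *; exact: gg_ge0.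
have h2 : 0 <= \sum_(i | i != v0) \sum_w gg S i w.
  by apply: sumr_ge0 => *; apply: sumr_ge0 => *; exact: gg_ge0.
suff : delta <= gg S v0 w0 by move=> h; lra.
rewrite /gg hvw (eqP hv) (negbTE hw) eqxx subr0 !mul1r.
have hFpos : 0 < total_fitness f S.
  rewrite /total_fitness (bigD1 v0) //=.
  have : 0 <= \sum_(i | i != v0) f (S i) by apply: sumr_ge0 => i _; apply: le_trans (hf _).
  have := hf (S v0); lra.
have hdv : 1 <= dg v0.
  rewrite /dg ler1n; apply/card_gt0P; exists w0; by rewrite inE.
have hdw : 1 <= dg w0.
  rewrite /dg ler1n; apply/card_gt0P; exists v0; by rewrite inE e_sym.
have hfa : 1 <= f alpha := hf alpha.
have hst : f (S w0) <= fstar f alpha := le_star hw.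
have hkk : (f alpha * (#|V|%:R)^+3)^-1 <= kk S v0 w0.
  rewrite /kk lef_pV2 ?posrE; last 2 first.
  - apply: mulr_gt0; first lra.
    by apply: exprn_gt0; have := dg_le v0; lra.
  - by apply: mulr_gt0; [apply: mulr_gt0|]; lra.
  have := F_le S; have := dg_le v0; have := dg_le w0.
  move=> a b c.
  rewrite exprSr expr2.
  have hF0 : 0 <= total_fitness f S by lra.
  have : total_fitness f S * dg v0 <= #|V|%:R * f alpha * #|V|%:R.
    by apply: ler_pM => //; lra.
  move=> d; have : total_fitness f S * dg v0 * dg w0 <= #|V|%:R * f alpha * #|V|%:R * #|V|%:R.
    by apply: ler_pM => //; apply: mulr_ge0; lra.
  move=> d2; apply: (le_trans d2); rewrite le_eqVlt; apply/orP; left; apply/eqP; ring.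
rewrite /delta; have hpos : 0 <= f alpha - fstar f alpha by rewrite subr_ge0 ltW.
rewrite (le_trans (ler_wpM2l hpos hkk)) //.
apply: ler_wpM2r; [exact: kk_ge0 | lra].
Qed.

Definition psi (S : state V tau) : rat := #|V|%:R - phi S.

Lemma dginv_le1 x : 0 <= (dg x)^-1 <= 1.
Proof.
rewrite invr_ge0 ler0n /=.
have [h0|h0] := eqVneq (dg x) 0; first by rewrite h0 invr0.
rewrite invf_le1; last by rewrite lt_def h0 ler0n.
by move: h0; rewrite /dg pnatr_eq0 ler1n lt0n.
Qed.

Lemma psi_ge0 S : 0 <= psi S.
Proof.
rewrite /psi subr_ge0 /phi.
have -> : (#|V|%:R : rat) = \sum_(x : V) 1 by rewrite sumr_const.
apply: ler_sum => x _.
have /andP[a b] := dginv_le1 x.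
case: (S x == alpha); rewrite ?mul1r ?mul0r //.
Qed.

Lemma T_le1 (S : state V tau) : 0 <= \sum_(v : V) \sum_(w in nbhd e v) cf S v <= 1.
Proof.
have hF : 0 <= total_fitness f S by apply: sumr_ge0 => u _; apply: le_trans (hf _).
have hcf : forall v, 0 <= cf S v.
  move=> v; rewrite /cf; apply: mulr_ge0; last by have /andP[] := dginv_le1 v.
  by apply: divr_ge0 => //; apply: le_trans (hf _).
apply/andP; split; first by apply: sumr_ge0 => v _; apply: sumr_ge0.
apply: (@le_trans _ _ (\sum_(v : V) f (S v) / total_fitness f S)).
  apply: ler_sum => v _; rewrite sumr_const -mulr_natr /cf -/(dg v) -mulrA.
  have [h0|h0] := eqVneq (dg v) 0; first by rewrite h0 invr0 mul0r mulr0; apply: divr_ge0 => //; apply: le_trans (hf _).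
  by rewrite mulVf // mulr1.
rewrite -mulr_suml.
have [h0|h0] := eqVneq (total_fitness f S) 0; first by rewrite h0 invr0 mulr0.
by rewrite -/(total_fitness f S) mulfV.
Qed.

Lemma step (S : state V tau) : ~~ absorbed alpha S ->
  \sum_(S' : state V tau) trans e f S S' * psi S' <= psi S - delta.
Proof.
move=> hS; rewrite trans_sum.
have E : forall v, \sum_(w in nbhd e v) cf S v * psi (upd S v w) =
  \sum_(w in nbhd e v) cf S v * psi S -
  \sum_(w in nbhd e v) cf S v * (((S v == alpha)%:R - (S w == alpha)%:R) * (dg w)^-1).
  move=> v; rewrite -sumrB; apply: eq_bigr => w _; rewrite /psi phi_upd; ring.
under eq_bigr do rewrite E.
rewrite sumrB drift_eq.
have hd := drift_lb hS.
under eq_bigr do rewrite -mulr_suml.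
rewrite -mulr_suml.
have /andP[t0 t1] := T_le1 S.
have hp := psi_ge0 S.
set T := \sum_(v : V) \sum_(w in nbhd e v) cf S v in t0 t1 *.
have : T * psi S <= psi S by rewrite ler_piMl.
lra.
Qed.

Lemma surv_ge0 M0 t S : 0 <= surv e f alpha M0 t S.
Proof.
elim: t S => [|t IH] S /=; rewrite ffunE; first by case: ifP.
case: ifP => // _; apply: sumr_ge0 => S' _; apply: mulr_ge0 => //; exact: trans_ge0.
Qed.

Lemma surv_abs M0 t S : absorbed alpha S -> surv e f alpha M0 t S = 0.
Proof.
by case: t => [|t] /= h; rewrite ffunE h // andbF.
Qed.

Definition mm M0 t : rat := \sum_(S : state V tau) surv e f alpha M0 t S * psi S.

Lemma mm_step M0 t : mm M0 t.+1 <= mm M0 t - delta * tail_prob e f alpha M0 t.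
Proof.
rewrite /mm /tail_prob mulr_sumr -sumrB.
apply: (@le_trans _ _ (\sum_(S' : state V tau) (\sum_(S : state V tau) surv e f alpha M0 t S * trans e f S S') * psi S')).
  apply: ler_sum => S' _ /=; rewrite ffunE; case: ifP => _; last by [].
  rewrite mul0r; apply: mulr_ge0; last exact: psi_ge0.
  by apply: sumr_ge0 => S _; apply: mulr_ge0; [exact: surv_ge0|exact: trans_ge0].
under eq_bigr do rewrite mulr_suml.
rewrite exchange_big /=; apply: ler_sum => S _.
under eq_bigr do rewrite -mulrA.
rewrite -mulr_sumr.
have [ha|ha] := boolP (absorbed alpha S); first by rewrite surv_abs // !mul0r mulr0 subr0.
have := step ha; have := surv_ge0 M0 t S => h0 h1.
rewrite [delta * _]mulrC -mulrBr; exact: ler_wpM2l.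
Qed.

Lemma main_bound M0 N :
  mm M0 N + delta * \sum_(t < N) tail_prob e f alpha M0 t <= mm M0 0.
Proof.
elim: N => [|N IH]; first by rewrite big_ord0 mulr0 addr0.
rewrite big_ord_recr /= mulrDr.
have := mm_step M0 N; lra.
Qed.

Lemma mm0_le M0 : mm M0 0 <= #|V|%:R.
Proof.
rewrite /mm (bigD1 M0) //= big1 ?addr0; last first.
  by move=> S hS; rewrite ffunE (negbTE hS) mul0r.
rewrite ffunE eqxx /=.
have hp : phi M0 >= 0.
  by apply: sumr_ge0 => x _; apply: mulr_ge0 => //; have /andP[] := dginv_le1 x.
have := psi_ge0 M0; rewrite /psi => h.
case: (absorbed alpha M0) => /=; rewrite ?mul0r ?mul1r; lra.
Qed.

End Proof.

Unset Implicit Arguments.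
Set Strict Implicit.

Theorem corollary14 (V tau : finType) (e : rel V)
  (e_sym : symmetric e) (e_irr : irreflexive e)
  (G_conn : forall x y : V, connect e x y)
  (n k : nat) (hn : #|V| = n) (hk : #|tau| = k) (hk1 : (1 < k)%N)
  (f : tau -> rat) (hf : forall i, 1 <= f i)
  (alpha : tau) (halpha : alpha \in tauplus f)
  (hstar : fstar f alpha < f alpha)
  (M0 : state V tau) (hM0 : Omega0 M0) :
  expected_absorption_le e f alpha M0
    (fplus f / (fplus f - fstar f alpha) * ((n + 1) * n ^ 3)%N%:R).
Proof.
have hfa : f alpha = fplus f by move: halpha; rewrite inE => /eqP.
have hmax : forall i, f i <= f alpha.
  by move=> i; rewrite hfa /fplus; apply: (le_bigmax _ (fun j => f j)).
have hn1 : (1 <= n)%N.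
  move: hM0 => /forallP /(_ alpha) /existsP [v _].
  by rewrite -hn; apply/card_gt0P; exists v.
move=> N.
have hb := main_bound e_sym hf hmax hstar G_conn M0 N.
have hm0 := mm0_le e f alpha M0.
have hmN : 0 <= mm e f alpha M0 N.
  apply: sumr_ge0 => S _; apply: mulr_ge0; first exact: surv_ge0.
  exact: psi_ge0.
rewrite -hfa.
set X := \sum_(t < N) tail_prob e f alpha M0 t in hb *.
rewrite hn in hm0.
have hfa1 : 1 <= f alpha := hf alpha.
have hgap : 0 < f alpha - fstar f alpha by rewrite subr_gt0.
have hnR : 1 <= (n%:R : rat) by rewrite ler1n.
have hdX : delta V f alpha * X <= n%:R by lra.
have hdpos : 0 < delta V f alpha.
  rewrite /delta hn; apply: divr_gt0 => //; apply: mulr_gt0; first lra.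
  by apply: exprn_gt0; lra.
have hX : X <= (delta V f alpha)^-1 * n%:R.
  by rewrite -(ler_pM2l hdpos) mulrA mulfV ?mul1r // gt_eqF.
apply: (le_trans hX).
rewrite /delta hn invf_div natrM natrX natrD.
have hc : 0 <= f alpha / (f alpha - fstar f alpha) by apply: divr_ge0; lra.
have -> : f alpha * n%:R ^+ 3 / (f alpha - fstar f alpha) * n%:R =
   f alpha / (f alpha - fstar f alpha) * (n%:R ^+ 3 * n%:R) by ring.
apply: ler_wpM2l => //.
rewrite mulrC; apply: ler_wpM2r; first by apply: exprn_ge0; lra.
lra.
Qed.
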